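(* Let $t\geq 1$ be an integer. Let $(V,P)$ be an irreducible, reversible Markov process on a finite set $V$ with stationary distribution $\pi$, and let $\sigma,\nu$ be probability distributions on $V$ with disjoint supports. Then \[\sum_{v\in V}\frac{\nu_v^2}{\pi_v}\leq 2R_{\mathrm{eff}}(P^t;\sigma-\nu).\]
   Context: A Markov process $(V,P)$ has a row-stochastic transition matrix $P$; irreducible means every state can reach every other with positive probability in some number of steps (then the stationary distribution $\pi=\pi P$ is unique with $\pi_v>0$); reversible means $\pi_vP_{vw}=\pi_wP_{wv}$ for all $v,w$ (so $P^t$ is also reversible with respect to $\pi$). For a process $Q$ reversible with respect to $\pi$, associate the undirected graph on $V$ with an edge $\{v,w\}$ whenever $Q_{vw}>0$ and resistance $r_{\{v,w\}}=1/(\pi_vQ_{vw})$, each edge arbitrarily oriented. For $\xi\in\mathbb{R}^V$, $R_{\mathrm{eff}}(Q;\xi)$ is the minimum of the energy $\sum_e r_ef_e^2$ over flows $f:E\to\mathbb{R}$ whose net-flow $\delta_f(v)=\sum_{e\text{ out of }v}f_e-\sum_{e\text{ into }v}f_e$ equals $\xi$ (taken to be $+\infty$ if no such flow exists). *)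

(* Defs.v *)
(* V = 'I_n, R : realType. *)
From HB Require Import structures.
From mathcomp Require Import all_boot all_order all_algebra.
From mathcomp Require Import all_classical all_reals all_analysis.
Set Implicit Arguments. Unset Strict Implicit. Unset Printing Implicit Defensive.
Import Order.TTheory GRing.Theory Num.Theory.
Local Open Scope ring_scope.

Section Markov.
Variables (R : realType) (n : nat).

Definition row_stochastic (P : 'M[R]_n) : Prop :=
  (forall v w, 0 <= P v w) /\ (forall v, \sum_w P v w = 1).

Definition irreducible (P : 'M[R]_n) : Prop :=
  forall v w, exists k : nat, 0 < (P ^+ k) v w.

Definition prob_distr (mu : 'I_n -> R) : Prop :=
  (forall v, 0 <= mu v) /\ \sum_v mu v = 1.

Definition stationary (P : 'M[R]_n) (pi : 'I_n -> R) : Prop :=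
  prob_distr pi /\ forall w, \sum_v pi v * P v w = pi w.

Definition reversible (P : 'M[R]_n) (pi : 'I_n -> R) : Prop :=
  forall v w, pi v * P v w = pi w * P w v.

(* Edges of the graph associated to Q: unordered pairs {v,w} with Q v w > 0,
   each oriented from the smaller to the larger index (v <= w). *)
Definition is_edge (Q : 'M[R]_n) (v w : 'I_n) : bool := (v <= w)%N && (0 < Q v w).

Definition resistance (Q : 'M[R]_n) (pi : 'I_n -> R) (v w : 'I_n) : R :=
  (pi v * Q v w)^-1.

(* a flow is a real number on each (oriented) edge; values off edges are ignored *)
Definition energy (Q : 'M[R]_n) (pi : 'I_n -> R) (f : 'I_n -> 'I_n -> R) : R :=
  \sum_v \sum_(w | is_edge Q v w) resistance Q pi v w * f v w ^+ 2.

Definition netflow (Q : 'M[R]_n) (f : 'I_n -> 'I_n -> R) (v : 'I_n) : R :=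
  \sum_(w | is_edge Q v w) f v w - \sum_(u | is_edge Q u v) f u v.

(* minimum energy over flows with net-flow xi; +oo if no such flow *)
Definition Reff (Q : 'M[R]_n) (pi : 'I_n -> R) (xi : 'I_n -> R) : \bar R :=
  ereal_inf [set (energy Q pi f)%:E | f in [set f | forall v, netflow Q f v = xi v]].

End Markov.

(* Main.v *)
Require Import Defs.
From HB Require Import structures.
From mathcomp Require Import all_boot all_order all_algebra.
From mathcomp Require Import all_classical all_reals all_analysis.
Import Order.TTheory GRing.Theory Num.Theory.
From mathcomp Require Import ring lra.
Local Open Scope ring_scope.

Lemma powS_l (R : realType) n (P : 'M[R]_n) k v w :
  (P ^+ k.+1) v w = \sum_u P v u * (P ^+ k) u w.
Proof. by rewrite exprS -mulmxE mxE. Qed.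
Lemma powS_r (R : realType) n (P : 'M[R]_n) k v w :
  (P ^+ k.+1) v w = \sum_u (P ^+ k) v u * P u w.
Proof. by rewrite exprSr -mulmxE mxE. Qed.
Lemma pow0E (R : realType) n (P : 'M[R]_n) v w : (P ^+ 0) v w = (v == w)%:R.
Proof. by rewrite expr0 mxE. Qed.

Lemma pow_ge0 (R : realType) n (P : 'M[R]_n) :
  (forall v w, 0 <= P v w) -> forall k v w, 0 <= (P ^+ k) v w.
Proof.
move=> H; elim=> [|k IH] v w; first by rewrite pow0E ler0n.
by rewrite powS_l; apply: sumr_ge0 => u _; apply: mulr_ge0.
Qed.

Lemma pow_row (R : realType) n (P : 'M[R]_n) :
  (forall v, \sum_w P v w = 1) -> forall k v, \sum_w (P ^+ k) v w = 1.
Proof.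
move=> H; elim=> [|k IH] v.
  rewrite (bigD1 v) //= pow0E eqxx big1 ?addr0 // => w /negbTE.
  by rewrite eq_sym pow0E => ->.
under eq_bigr do rewrite powS_l.
rewrite exchange_big /= -(H v); apply: eq_bigr => u _.
by rewrite -mulr_sumr IH mulr1.
Qed.

Lemma pow_stat (R : realType) n (P : 'M[R]_n) (pi : 'I_n -> R) :
  (forall w, \sum_v pi v * P v w = pi w) ->
  forall k w, \sum_v pi v * (P ^+ k) v w = pi w.
Proof.
move=> H; elim=> [|k IH] w.
  rewrite (bigD1 w) //= pow0E eqxx mulr1 big1 ?addr0 // => v /negbTE.
  by rewrite pow0E => ->; rewrite mulr0.
under eq_bigr do rewrite powS_r mulr_sumr.
rewrite exchange_big /= -H; apply: eq_bigr => u _.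
by rewrite -IH mulr_suml; apply: eq_bigr => v _; rewrite mulrA.
Qed.

Lemma pow_rev (R : realType) n (P : 'M[R]_n) (pi : 'I_n -> R) :
  reversible P pi -> forall k, reversible (P ^+ k) pi.
Proof.
move=> H; elim=> [|k IH] v w.
  rewrite !pow0E eq_sym; case: eqP => [->|_]; by rewrite ?mulr0.
rewrite powS_r powS_l !mulr_sumr; apply: eq_bigr => u _.
by rewrite mulrA IH mulrAC H -mulrA.
Qed.

Lemma flow_identity (R : realType) n (Q : 'M[R]_n) (f : 'I_n -> 'I_n -> R) (phi : 'I_n -> R) :
  \sum_v phi v * netflow Q f v =
  \sum_v \sum_(w | is_edge Q v w) f v w * (phi v - phi w).
Proof.
rewrite /netflow.
under eq_bigr do rewrite mulrBr !mulr_sumr.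
under [RHS]eq_bigr do under eq_bigr do rewrite mulrBr.
under [RHS]eq_bigr do rewrite sumrB.
rewrite !sumrB; congr (_ - _).
  by apply: eq_bigr => v _; apply: eq_bigr => w _; rewrite mulrC.
under eq_bigr do rewrite big_mkcond /=.
under [RHS]eq_bigr do rewrite big_mkcond /=.
rewrite exchange_big /=; apply: eq_bigr => v _; apply: eq_bigr => w _.
by case: ifP => _ //; rewrite mulrC.
Qed.

Lemma main_bound (R : realType) n (Q : 'M[R]_n) (pi sigma nu : 'I_n -> R)
  (f : 'I_n -> 'I_n -> R) :
  (forall v, 0 < pi v) -> (forall v w, 0 <= Q v w) -> (forall v, \sum_w Q v w = 1) ->
  reversible Q pi ->
  (forall v, sigma v = 0 \/ nu v = 0) -> (forall v, netflow Q f v = sigma v - nu v) ->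
  \sum_v nu v ^+ 2 / pi v <= 2 * energy Q pi f.
Proof.
move=> pi0 Q0 Qrow Qrev disj Hf.
have pin0 v : pi v != 0 by rewrite gt_eqF.
set h := fun v => nu v / pi v.
set A := \sum_v pi v * h v ^+ 2.
have hA : \sum_v nu v ^+ 2 / pi v = A.
  by apply: eq_bigr => v _; rewrite /h; field.
have hA2 : A = \sum_v (- h v) * netflow Q f v.
  apply: eq_bigr => v _; rewrite Hf /h.
  by case: (disj v) => ->; field; apply: pin0.
set g := fun v w => pi v * Q v w * (h v - h w) ^+ 2.
have g0 v w : 0 <= g v w.
  by apply: mulr_ge0; [apply: mulr_ge0; [exact: ltW | exact: Q0] | exact: sqr_ge0].
have gsym v w : g v w = g w v.
  by rewrite /g Qrev -sqrrN opprB.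
set D := \sum_v \sum_(w | is_edge Q v w) g v w.
have hE : A <= energy Q pi f + D / 4.
  rewrite hA2 flow_identity /energy /D mulr_suml -big_split /=.
  apply: ler_sum => v _; rewrite mulr_suml -big_split /=.
  apply: ler_sum => w /andP [_ Qp].
  rewrite /resistance /g.
  have c0 : 0 < pi v * Q v w by rewrite mulr_gt0.
  set c := pi v * Q v w; set F := f v w.
  rewrite -subr_ge0.
  have -> : c^-1 * F ^+ 2 + c * (h v - h w) ^+ 2 / 4 - F * (- h v - - h w)
     = c^-1 * (F - c * (h w - h v) / 2) ^+ 2.
    by field; rewrite gt_eqF.
  by rewrite mulr_ge0 ?sqr_ge0 // invr_ge0 ltW.
have hD1 : D <= \sum_(v : 'I_n) \sum_(w : 'I_n) (if (v <= w)%N then g v w else 0).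
  rewrite /D; apply: ler_sum => v _; rewrite /is_edge big_mkcondr /= big_mkcond /=.
  apply: ler_sum => w _; case: ifP => _ //; case: ifP => _ //.
set T := \sum_(v : 'I_n) \sum_(w : 'I_n) g v w.
have hT : T = 2 * \sum_(v : 'I_n) \sum_(w : 'I_n) (if (v <= w)%N then g v w else 0).
  have -> : T = \sum_(v : 'I_n) \sum_(w : 'I_n) (if (v <= w)%N then g v w else 0)
              + \sum_(v : 'I_n) \sum_(w : 'I_n) (if (w < v)%N then g v w else 0).
    rewrite -big_split; apply: eq_bigr => v _; rewrite -big_split.
    apply: eq_bigr => w _; case: leqP => _ /=; by rewrite ?addr0 ?add0r.
  rewrite mulr2n mulrDl mul1r; congr (_ + _).
  rewrite exchange_big /=; apply: eq_bigr => v _; apply: eq_bigr => w _.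
  case: (ltngtP v w) => [h1|h1|h1] //.
  have -> : v = w by apply: val_inj.
  by rewrite /g subrr expr0n /= !mulr0.
have hT4 : T <= 4 * A.
  apply: (@le_trans _ _ (\sum_(v : 'I_n) \sum_(w : 'I_n) (2 * (pi v * Q v w * h v ^+ 2)
                 + 2 * (pi w * Q w v * h w ^+ 2)))).
    apply: ler_sum => v _; apply: ler_sum => w _.
    rewrite /g -(Qrev v w).
    have hq : 0 <= pi v * Q v w by apply: mulr_ge0; [exact: ltW | exact: Q0].
    have hs : (h v - h w) ^+ 2 <= 2 * h v ^+ 2 + 2 * h w ^+ 2.
      rewrite -subr_ge0.
      have -> : 2 * h v ^+ 2 + 2 * h w ^+ 2 - (h v - h w) ^+ 2 = (h v + h w) ^+ 2 by ring.
      exact: sqr_ge0.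
    apply: (@le_trans _ _ (pi v * Q v w * (2 * h v ^+ 2 + 2 * h w ^+ 2))).
      exact: ler_wpM2l.
    by rewrite le_eqVlt; apply/orP; left; apply/eqP; ring.
  have hX : \sum_(v : 'I_n) \sum_(w : 'I_n) 2 * (pi v * Q v w * h v ^+ 2) = 2 * A.
    rewrite /A mulr_sumr; apply: eq_bigr => v _.
    rewrite -[RHS]mulr1 -(Qrow v) mulr_sumr; apply: eq_bigr => w _; ring.
  under eq_bigr do rewrite big_split /=.
  rewrite big_split /= hX exchange_big /= hX.
  by rewrite le_eqVlt; apply/orP; left; apply/eqP; ring.
have hSle : \sum_(v : 'I_n) \sum_(w : 'I_n) (if (v <= w)%N then g v w else 0) <= 2 * A.
  by move: hT hT4; lra.
rewrite hA; move: hE hD1 hSle; lra.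
Qed.

Theorem lemma3p3 (R : realType) (n : nat) (t : nat) (P : 'M[R]_n)
  (pi sigma nu : 'I_n -> R) :
  (1 <= t)%N ->
  row_stochastic P -> irreducible P -> stationary P pi -> reversible P pi ->
  prob_distr sigma -> prob_distr nu ->
  (forall v, sigma v = 0 \/ nu v = 0) ->
  ((\sum_v nu v ^+ 2 / pi v)%:E <= 2%:E * Reff (P ^+ t) pi (fun v => (sigma v - nu v)%R))%E.
Proof.
move=> t1 [P0 Prow] Pirr [[pi0 pisum] pistat] Prev _ _ disj.
have [u piu] : exists u, 0 < pi u.
  case: (pselect (exists u, 0 < pi u)) => // H; exfalso.
  have : \sum_v pi v = 0.
    apply: big1 => u _; apply/eqP; rewrite eq_le pi0 andbT leNgt.
    by apply/negP => hu; apply: H; exists u.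
  by rewrite pisum => /eqP; rewrite oner_eq0.
have pipos v : 0 < pi v.
  have [k hk] := Pirr u v.
  rewrite -(@pow_stat R n P pi pistat k v).
  apply: (@lt_le_trans _ _ (pi u * (P ^+ k) u v)); first exact: mulr_gt0.
  rewrite (bigD1 u) //= lerDl; apply: sumr_ge0 => i _; apply: mulr_ge0.
    exact: pi0.
  exact: pow_ge0.
set X := \sum_v nu v ^+ 2 / pi v.
apply: (@le_trans _ _ (2%:E * (X / 2)%:E)%E).
  have h2 : 2 * (X / 2) = X by field.
  by rewrite -EFinM h2.
apply: lee_wpmul2l; first by rewrite lee_fin.
apply: le_ereal_inf_tmp => y [f Hf <-].
rewrite lee_fin.
have := @main_bound R n (P ^+ t) pi sigma nu f pipos (@pow_ge0 R n P P0 t) (@pow_row R n P Prow t)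
  (@pow_rev R n P pi Prev t) disj Hf.
rewrite -/X; lra.
Qed.
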